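(* Let $p(z)$, $E$, $\Sigma_1$, $\Sigma_2$ be as in the context. Then \[ \mathrm{Im}\,(p(z)-E)>0\quad\text{for } z\in\mathbb{C}^+\setminus\Sigma_1,\qquad \mathrm{Im}\,(p(z)-E)<0\quad\text{for } z\in\mathbb{C}^-\setminus\Sigma_2 . \]
   Context: Fix $z_j=\xi_j+\mathrm{i}\eta_j$ ($j=1,2$) with $0<\eta_1<\eta_2$, and consider the genus-one Riemann surface $R^2=(z-z_1)(z-\bar z_1)(z-z_2)(z-\bar z_2)$, with sheet 1 determined by $R>0$ for $\mathrm{Re}\,z>0$ large, a canonical homology basis $\mathcal{A},\mathcal{B}$ satisfying $\sigma(\mathcal{A})=-\mathcal{A}$, $\sigma(\mathcal{B})=\mathcal{B}$ under the anti-holomorphic involution $\sigma(z,R)=(\bar z,\bar R)$. Let $\mathrm{d}p$ be the unique meromorphic differential of the second kind with $\mathrm{d}p=\pm(1+\mathcal{O}(z^{-2}))\mathrm{d}z$ as $z\to\infty^\pm$ and $\oint_{\mathcal{A}}\mathrm{d}p=0$ (explicitly $\mathrm{d}p=\frac{z^2-\mathrm{Re}(z_1+z_2)z+c_0}{R}\mathrm{d}z$ for a real constant $c_0$). Let $p(z)=\int_{z_2}^z\mathrm{d}p$ on sheet 1, so that $p(z)=z+E+\mathcal{O}(z^{-1})$ as $z\to\infty$, with $E\in\mathbb{R}$. It is assumed that the level set $\{z:\mathrm{Im}\,p(z)=0\}$ consists of $\mathbb{R}$ together with two arcs not meeting $\mathbb{R}$: $\Sigma_1\subset\mathbb{C}^+$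 joining $z_1$ to $z_2$ and $\Sigma_2=\overline{\Sigma_1}\subset\mathbb{C}^-$ joining $\bar z_1$ to $\bar z_2$; these are the branch cuts of $R$, and $p$ is single-valued and analytic on $\mathbb{C}\setminus(\Sigma_1\cup\Sigma_2)$ (the $\mathcal{A}$-normalization makes it single valued). *)

(* Defs.v *)
From Stdlib Require Import Reals.
From Coquelicot Require Export Coquelicot.
Open Scope R_scope.

(* The quartic (z - z1)(z - conj z1)(z - z2)(z - conj z2) under the square root R. *)
Definition quartic (z1 z2 z : C) : C :=
  ((z - z1) * (z - Cconj z1) * (z - z2) * (z - Cconj z2))%C.

Definition is_arc (gamma : R -> C) (a b : C) : Prop :=
  (forall t : R, continuous gamma t) /\
  (forall s t : R, 0 <= s <= 1 -> 0 <= t <= 1 -> gamma s = gamma t -> s = t) /\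
  gamma 0 = a /\ gamma 1 = b.

Definition on_arc (gamma : R -> C) (z : C) : Prop :=
  exists t : R, 0 <= t <= 1 /\ gamma t = z.

Definition on_conj_arc (gamma : R -> C) (z : C) : Prop := on_arc gamma (Cconj z).

(* Omega = C \ (Sigma_1 ∪ Sigma_2), the domain of analyticity of R and p. *)
Definition Omega (gamma : R -> C) (z : C) : Prop :=
  ~ on_arc gamma z /\ ~ on_conj_arc gamma z.

(* Main.v *)
Require Import Defs.
From Stdlib Require Import Reals.
From Coquelicot Require Import Coquelicot.
Open Scope R_scope.

From Stdlib Require Import Lra.
Module EVT2.
From HB Require Import structures.
From mathcomp Require Import all_boot all_order all_algebra.
From mathcomp Require Import all_classical all_reals all_analysis.
From mathcomp Require Import Rstruct Rstruct_topology.
Import Order.TTheory GRing.Theory Num.Theory.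
Import numFieldNormedType.Exports.
Local Open Scope classical_set_scope.

Lemma evt2 (f : R -> R -> R) (a b c d : R) : Rle a b -> Rle c d ->
 (forall x y e, Rlt 0 e -> exists del, Rlt 0 del /\ forall x' y', Rlt (Rabs (Rminus x' x)) del ->
     Rlt (Rabs (Rminus y' y)) del -> Rlt (Rabs (Rminus (f x' y') (f x y))) e) ->
 exists x0 y0, (Rle a x0 /\ Rle x0 b) /\ (Rle c y0 /\ Rle y0 d) /\
   forall x y, (Rle a x /\ Rle x b) -> (Rle c y /\ Rle y d) -> Rle (f x0 y0) (f x y).
Proof.
move=> ab cd fc.
pose A := `[a, b]%classic `*` `[c, d]%classic.
have A0 : A !=set0.
  exists (a, c); split; rewrite /= in_itv /=; apply/andP; split; apply/RleP; lra.
have cA : compact A by apply: compact_setX; apply: segment_compact.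
have cf : {within A, continuous (fun p : R * R => f p.1 p.2)}.
  apply: continuous_subspaceT => p.
  apply/cvg_ballP => e /RltP e0.
  have [del [/RltP del0 H]] := fc p.1 p.2 e e0.
  exists (ball p.1 del, ball p.2 del); first by split; apply: nbhsx_ballx.
  move=> q [/= h1 h2].
  rewrite /ball /= in h1 h2 *.
  rewrite distrC in h1; rewrite distrC in h2; rewrite distrC; apply/RltP; apply: H; apply/RltP; [exact: h1 | exact: h2].
have [[x0 y0] /set_mem [/= hx hy] hmin] := compact_EVT_min A0 cA cf.
exists x0, y0.
move: hx hy; rewrite !in_itv /= => /andP [/RleP ? /RleP ?] /andP [/RleP ? /RleP ?].
split; first by split.
split; first by split.
move=> x y [hx1 hx2] [hy1 hy2]; apply/RleP; apply: (hmin (x, y)).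
apply/mem_set; split; rewrite /= in_itv /=; apply/andP; split; apply/RleP; lra.
Qed.
End EVT2.

From Stdlib Require Import Lra.

Definition box (w z : C) (d : R) := Rabs (Re w - Re z) < d /\ Rabs (Im w - Im z) < d.

Lemma im_le_Cmod' (c : C) : Rabs (Im c) <= Cmod c.
Proof.
  destruct c as [x y]. unfold Cmod, Im; simpl.
  rewrite <- sqrt_Rsqr_abs. apply sqrt_le_1_alt. unfold Rsqr. nra.
Qed.

Lemma Cmod_le_sum (c : C) : Cmod c <= Rabs (Re c) + Rabs (Im c).
Proof.
  destruct c as [x y]. unfold Cmod, Re, Im; simpl.
  apply Rsqr_incr_0_var.
  - rewrite Rsqr_sqrt by nra. unfold Rsqr.
    pose proof (Rabs_pos x); pose proof (Rabs_pos y).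
    replace (x*(x*1)) with (Rabs x * Rabs x) by (rewrite <- Rabs_mult; rewrite Rabs_right; nra).
    replace (y*(y*1)) with (Rabs y * Rabs y) by (rewrite <- Rabs_mult; rewrite Rabs_right; nra).
    nra.
  - pose proof (Rabs_pos x); pose proof (Rabs_pos y); lra.
Qed.

Lemma deriv_eps (f : C -> C) (z D : C) :
  is_derive (K := C_AbsRing) (V := C_NormedModule) f z D ->
  forall eps, 0 < eps -> exists del, 0 < del /\ forall w, Cmod (w - z)%C < del ->
    Cmod (f w - f z - (w - z) * D)%C <= eps * Cmod (w - z)%C.
Proof.
  intros [_ Hd] eps Heps.
  assert (H := Hd z (fun P HP => HP) (mkposreal eps Heps)).
  destruct H as [[del Hdel] H]. simpl in H.
  exists del; split; [exact Hdel|].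
  intros w hw. apply H. exact hw.
Qed.

Ltac cunf := unfold Re, Im, Cminus, Cplus, Copp, Cmult, RtoC, Cconj in *; simpl in *.

Lemma line_deriv (f : C -> C) (z u D : C) (t : R) :
  is_derive (K := C_AbsRing) (V := C_NormedModule) f (z + RtoC t * u)%C D ->
  derivable_pt_lim (fun t => Im (f (z + RtoC t * u)%C)) t (Im (u * D)%C).
Proof.
  intros Hd eps Heps.
  assert (Hu : 0 <= Cmod u) by apply Cmod_ge_0.
  assert (He' : 0 < eps / 2 / (Cmod u + 1)).
  { apply Rdiv_lt_0_compat; lra. }
  destruct (deriv_eps _ _ _ Hd _ He') as [del [Hdel H]].
  assert (Hd' : 0 < del / (Cmod u + 1)) by (apply Rdiv_lt_0_compat; lra).
  exists (mkposreal _ Hd'). intros h hne hlt. simpl in hlt.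
  assert (Eq : ((z + RtoC (t + h) * u) - (z + RtoC t * u) = RtoC h * u)%C).
  { apply injective_projections; cunf; ring. }
  specialize (H (z + RtoC (t + h) * u)%C).
  rewrite Eq, Cmod_mult, Cmod_R in H.
  assert (Hl : Rabs h * Cmod u < del).
  { pose proof (Rabs_pos h). apply Rle_lt_trans with (Rabs h * (Cmod u + 1)); [nra|].
    apply Rlt_div_r in hlt; [| lra]. lra. }
  specialize (H Hl).
  pose proof (im_le_Cmod' (f (z + RtoC (t + h) * u) - f (z + RtoC t * u) - RtoC h * u * D)%C) as Him.
  assert (E2 : Im (f (z + RtoC (t + h) * u) - f (z + RtoC t * u) - RtoC h * u * D)%C
     = Im (f (z + RtoC (t + h) * u)%C) - Im (f (z + RtoC t * u)%C) - h * Im (u * D)%C).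
  { cunf. ring. }
  rewrite E2 in Him.
  assert (Hh : 0 < Rabs h) by (apply Rabs_pos_lt; exact hne).
  replace ((Im (f (z + RtoC (t + h) * u)%C) - Im (f (z + RtoC t * u)%C)) / h - Im (u * D)%C)
    with ((Im (f (z + RtoC (t + h) * u)%C) - Im (f (z + RtoC t * u)%C) - h * Im (u * D)%C) / h)
    by (field; exact hne).
  unfold Rdiv. rewrite Rabs_mult, Rabs_inv.
  apply Rle_lt_trans with (eps / 2 / (Cmod u + 1) * (Rabs h * Cmod u) * / Rabs h).
  { apply Rmult_le_compat_r; [left; apply Rinv_0_lt_compat; lra|]. lra. }
  replace (eps / 2 / (Cmod u + 1) * (Rabs h * Cmod u) * / Rabs h)
    with (eps / 2 * (Cmod u / (Cmod u + 1))) by (field; lra).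
  assert (Cmod u / (Cmod u + 1) < 1) by (apply Rlt_div_l; lra).
  nra.
Qed.

Lemma evt2 (f : R -> R -> R) (a b c d : R) : a <= b -> c <= d ->
 (forall x y e, 0 < e -> exists del, 0 < del /\ forall x' y', Rabs (x' - x) < del ->
     Rabs (y' - y) < del -> Rabs (f x' y' - f x y) < e) ->
 exists x0 y0, (a <= x0 <= b) /\ (c <= y0 <= d) /\
   forall x y, (a <= x <= b) -> (c <= y <= d) -> f x0 y0 <= f x y.
Proof. exact (EVT2.evt2 f a b c d). Qed.

From Stdlib Require Import Classical ClassicalEpsilon.

Lemma Rmin0_lip a b : Rabs (Rmin a 0 - Rmin b 0) <= Rabs (a - b).
Proof.
  unfold Rmin; destruct (Rle_dec a 0), (Rle_dec b 0);
  unfold Rabs; repeat destruct Rcase_abs; lra.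
Qed.

Lemma Rmin0_abs a : Rabs (Rmin a 0) <= Rabs a.
Proof. unfold Rmin; destruct (Rle_dec a 0); unfold Rabs; repeat destruct Rcase_abs; lra. Qed.

Definition nearzero (g : C -> R) (U : C -> Prop) (z : C) :=
  forall eps, 0 < eps -> exists del, 0 < del /\ forall w, box w z del -> U w -> Rabs (g w) < eps.

Lemma core (g : C -> R) (U S : C -> Prop) (s : R) :
  (s = 1 \/ s = -1) ->
  (forall z, U z <-> (0 < s * Im z /\ ~ S z)) ->
  (forall z, U z -> g z <> 0) ->
  (forall z, U z -> forall eps, 0 < eps -> exists del, 0 < del /\
      forall w, box w z del -> Rabs (g w - g z) < eps) ->
  (forall z, Im z = 0 -> nearzero g U z) ->
  (forall z, S z -> nearzero g U z) ->
  (exists K M, forall z, M < Cmod z -> U z -> - K / Cmod z <= g z) ->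
  (forall z, U z -> exists r, 0 < r /\ forall w, box w z r -> U w) ->
  (forall z, U z -> forall r, 0 < r -> exists w, box w z r /\ U w /\ g w < g z) ->
  forall z, U z -> 0 < g z.
Proof.
  intros Hs HU Hne Hgc Hreal HS [K [M HK]] Hopen Hloc z0 Hz0.
  destruct (Rlt_le_dec 0 (g z0)) as [|Hle]; [assumption|exfalso].
  assert (Hm : g z0 < 0) by (destruct Hle; [assumption| exfalso; apply (Hne z0); auto]).
  remember (g z0) as m eqn:Em.
  set (h := fun z => if excluded_middle_informative (U z) then Rmin (g z) 0 else 0).
  assert (hU : forall z, U z -> h z = Rmin (g z) 0).
  { intros z Hz; unfold h; destruct excluded_middle_informative; tauto. }
  assert (hnU : forall z, ~ U z -> h z = 0).
  { intros z Hz; unfold h; destruct excluded_middle_informative; tauto. }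
  assert (hsm : forall z, Rabs (h z) <= Rabs (g z) \/ h z = 0).
  { intros z; destruct (classic (U z)) as [Hz|Hz].
    - left; rewrite hU by exact Hz; apply Rmin0_abs.
    - right; apply hnU; exact Hz. }
  assert (hcont : forall z eps, 0 < eps -> exists del, 0 < del /\
            forall w, box w z del -> Rabs (h w - h z) < eps).
  { intros z eps Heps.
    destruct (classic (U z)) as [Hz|Hz].
    - destruct (Hopen z Hz) as [r [Hr Hrw]].
      destruct (Hgc z Hz eps Heps) as [del [Hdel Hw]].
      exists (Rmin r del); split; [apply Rmin_pos; assumption|].
      intros w [b1 b2].
      assert (Hbr : box w z r) by (split; eapply Rlt_le_trans; eauto; apply Rmin_l).
      assert (Hbd : box w z del) by (split; eapply Rlt_le_trans; eauto; apply Rmin_r).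
      rewrite (hU w (Hrw w Hbr)), (hU z Hz).
      eapply Rle_lt_trans; [apply Rmin0_lip| apply Hw; exact Hbd].
    - assert (Hnz : nearzero g U z -> exists del, 0 < del /\
            forall w, box w z del -> Rabs (h w - h z) < eps).
      { intros Hn. destruct (Hn eps Heps) as [del [Hdel Hw]].
        exists del; split; [exact Hdel|]. intros w Hb. rewrite (hnU z Hz), Rminus_0_r.
        destruct (classic (U w)) as [Hu|Hu].
        - eapply Rle_lt_trans; [| apply (Hw w Hb Hu)]. rewrite hU by exact Hu; apply Rmin0_abs.
        - rewrite hnU by exact Hu. rewrite Rabs_R0; exact Heps. }
      destruct (Rtotal_order (s * Im z) 0) as [Hneg|[H0|Hpos]].
      + exists (Rabs (Im z)); split.
        { apply Rabs_pos_lt. intro E; rewrite E in Hneg; lra. }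
        intros w [b1 b2].
        assert (~ U w).
        { rewrite HU. intros [Hp _].
          destruct Hs as [-> | ->]; unfold Rabs in *; repeat destruct Rcase_abs; lra. }
        rewrite (hnU z Hz), hnU by assumption. rewrite Rminus_0_r, Rabs_R0; exact Heps.
      + apply Hnz. apply Hreal.
        destruct Hs as [-> | ->]; lra.
      + apply Hnz. apply HS.
        apply NNPP. intro HnS. apply Hz. rewrite HU. tauto. }
  set (K' := Rabs K + 1).
  assert (HK' : 0 < K') by (unfold K'; pose proof (Rabs_pos K); lra).
  set (M' := Rmax (Rmax M (2 * K' / (- m))) (Cmod z0) + 1).
  set (B := M' + 1).
  assert (HM1 : M < M') by (unfold M'; pose proof (Rmax_l M (2 * K' / (- m)));
     pose proof (Rmax_l (Rmax M (2 * K' / (- m))) (Cmod z0)); lra).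
  assert (HM2 : 2 * K' / (- m) < M') by (unfold M'; pose proof (Rmax_r M (2 * K' / (- m)));
     pose proof (Rmax_l (Rmax M (2 * K' / (- m))) (Cmod z0)); lra).
  assert (HM3 : Cmod z0 < M') by (unfold M';
     pose proof (Rmax_r (Rmax M (2 * K' / (- m))) (Cmod z0)); lra).
  assert (HM0 : 0 < M').
  { pose proof (Cmod_ge_0 z0); lra. }
  destruct (evt2 (fun x y => h (x, y)) (- B) B (- B) B) as [x0 [y0 [Hx0 [Hy0 Hmin]]]].
  { unfold B; lra. } { unfold B; lra. }
  { intros x y e He. destruct (hcont (x, y) e He) as [del [Hdel Hw]].
    exists del; split; [exact Hdel|]. intros x' y' b1 b2. apply (Hw (x', y')). split; exact b1 || exact b2. }
  set (zs := (x0, y0)).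
  assert (Hbox : forall w, Rabs (Re w) <= B -> Rabs (Im w) <= B -> h zs <= h w).
  { intros [x y] Hw1 Hw2. unfold Re, Im in Hw1, Hw2; simpl in Hw1, Hw2. apply Hmin.
    - apply Rabs_le_between. lra.
    - apply Rabs_le_between. lra. }
  assert (Hz0m : h z0 = m).
  { rewrite hU by exact Hz0. rewrite <- Em. unfold Rmin; destruct Rle_dec; lra. }
  assert (Hzs : h zs <= m). { rewrite <- Hz0m; pose proof (re_le_Cmod z0); pose proof (im_le_Cmod' z0); apply Hbox; unfold B; lra. }
  assert (HUzs : U zs).
  { apply NNPP; intro Hn. rewrite hnU in Hzs by exact Hn. lra. }
  assert (Hgzs : h zs = g zs).
  { rewrite hU in * by exact HUzs. unfold Rmin in *; destruct Rle_dec; lra. }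
  assert (Hcm : Cmod zs <= M').
  { destruct (Rle_lt_dec (Cmod zs) M') as [|Hgt]; [assumption|exfalso].
    assert (Hg := HK zs ltac:(lra) HUzs).
    assert (Hcz : 0 < Cmod zs) by lra.
    assert (K'/Cmod zs < - m / 2).
    { apply Rlt_div_l; [lra|].
      assert (2 * K' / - m * (- m) = 2 * K') by (field; lra).
      assert (2 * K' / - m * (- m) < Cmod zs * (- m)) by (apply Rmult_lt_compat_r; lra).
      lra. }
    assert (- K' / Cmod zs <= - K / Cmod zs).
    { unfold Rdiv. apply Rmult_le_compat_r; [left; apply Rinv_0_lt_compat; lra|].
      unfold K'; unfold Rabs; destruct Rcase_abs; lra. }
    assert (- K' / Cmod zs = - (K' / Cmod zs)) by (field; lra).
    lra. }
  destruct (Hloc zs HUzs 1 Rlt_0_1) as [w [[b1 b2] [HUw Hgw]]].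
  assert (Hwb : h zs <= h w).
  { pose proof (re_le_Cmod zs); pose proof (im_le_Cmod' zs).
    apply Hbox; unfold Rabs in *; repeat destruct Rcase_abs; unfold B; lra. }
  rewrite (hU w HUw) in Hwb.
  pose proof (Rmin_l (g w) 0). lra.
Qed.

Lemma choose_u1 (s : R) (A : C) : (s = 1 \/ s = -1) -> A <> 0%C ->
  exists u : C, Rabs (Re u) <= 1 /\ Rabs (Im u) <= 1 /\ s * Im (u * A)%C < 0.
Proof.
  intros Hs HA. destruct A as [a1 a2].
  assert (Ha : a1 <> 0 \/ a2 <> 0).
  { destruct (Req_dec a1 0), (Req_dec a2 0); auto. subst. exfalso; apply HA; reflexivity. }
  destruct (Rtotal_order (s * a2) 0) as [H|[H|H]].
  - exists (1, 0). cunf. split; [unfold Rabs; destruct Rcase_abs; lra| split; [unfold Rabs; destruct Rcase_abs; lra|]]; ring_simplify; lra.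
  - destruct (Rtotal_order (s * a1) 0) as [H'|[H'|H']].
    + exists (0, 1). cunf. split; [unfold Rabs; destruct Rcase_abs; lra| split; [unfold Rabs; destruct Rcase_abs; lra|]]; ring_simplify; lra.
    + exfalso. destruct Hs as [-> | ->]; destruct Ha; lra.
    + exists (0, -1). cunf. split; [unfold Rabs; destruct Rcase_abs; lra| split; [unfold Rabs; destruct Rcase_abs; lra|]]; ring_simplify; lra.
  - exists (-1, 0). cunf. split; [unfold Rabs; destruct Rcase_abs; lra| split; [unfold Rabs; destruct Rcase_abs; lra|]]; ring_simplify; lra.
Qed.

Lemma choose_u2 (s : R) (A : C) : (s = 1 \/ s = -1) -> A <> 0%C ->
  exists u : C, Rabs (Re u) <= 1 /\ Rabs (Im u) <= 1 /\ s * Im (u * u * A)%C < 0.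
Proof.
  intros Hs HA. destruct A as [a1 a2].
  assert (Ha : a1 <> 0 \/ a2 <> 0).
  { destruct (Req_dec a1 0), (Req_dec a2 0); auto. subst. exfalso; apply HA; reflexivity. }
  destruct (Rtotal_order (s * a2) 0) as [H|[H|H]].
  - exists (1, 0). cunf. split; [unfold Rabs; destruct Rcase_abs; lra| split; [unfold Rabs; destruct Rcase_abs; lra|]]; ring_simplify; lra.
  - destruct (Rtotal_order (s * a1) 0) as [H'|[H'|H']].
    + exists (1, 1). cunf. split; [unfold Rabs; destruct Rcase_abs; lra| split; [unfold Rabs; destruct Rcase_abs; lra|]]; ring_simplify; lra.
    + exfalso. destruct Hs as [-> | ->]; destruct Ha; lra.
    + exists (1, -1). cunf. split; [unfold Rabs; destruct Rcase_abs; lra| split; [unfold Rabs; destruct Rcase_abs; lra|]]; ring_simplify; lra.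
  - exists (0, 1). cunf. split; [unfold Rabs; destruct Rcase_abs; lra| split; [unfold Rabs; destruct Rcase_abs; lra|]]; ring_simplify; lra.
Qed.

Lemma sign_div (s : R) (x y : C) : s * Im (x * Cconj y)%C < 0 -> s * Im (x / y)%C < 0.
Proof.
  destruct x as [x1 x2], y as [y1 y2]. unfold Cdiv, Cinv. cunf. intros H.
  assert (Hn : 0 < y1 * y1 + y2 * y2).
  { destruct (Req_dec y1 0), (Req_dec y2 0); subst; try nra. }
  match goal with |- ?L < 0 =>
    replace L with ((s * (x1 * - y2 + x2 * y1)) / (y1 * y1 + y2 * y2)) by (field; nra) end.
  apply Rdiv_neg_pos; assumption.
Qed.
Lemma ballC (z w : C) (e : R) : ball z e w <-> Rabs (Re w - Re z) < e /\ Rabs (Im w - Im z) < e.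
Proof. destruct z, w. unfold ball; simpl. unfold prod_ball, ball; simpl. unfold AbsRing_ball; simpl.
  unfold abs, minus, plus, opp; simpl. unfold Re, Im; simpl. tauto. Qed.

Lemma cont_line (Rf : C -> C) (z u : C) : continuous Rf z -> Rabs (Re u) <= 1 -> Rabs (Im u) <= 1 ->
  forall eps, 0 < eps -> exists del, 0 < del /\ forall t, Rabs t < del ->
   Cmod (Rf (z + RtoC t * u) - Rf z)%C < eps.
Proof.
  intros Hc hu1 hu2 eps He.
  assert (He2 : 0 < eps / 2) by lra.
  destruct (proj1 (filterlim_locally Rf (Rf z)) Hc (mkposreal _ He2)) as [del Hdel].
  exists del; split; [apply cond_pos|]. intros t ht.
  specialize (Hdel (z + RtoC t * u)%C).
  rewrite ballC in Hdel.
  destruct Hdel as [h1 h2].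
  { split.
    - replace (Re (z + RtoC t * u)%C - Re z) with (t * Re u) by (cunf; ring).
      rewrite Rabs_mult. pose proof (Rabs_pos t); nra.
    - replace (Im (z + RtoC t * u)%C - Im z) with (t * Im u) by (cunf; ring).
      rewrite Rabs_mult. pose proof (Rabs_pos t); nra. }
  eapply Rle_lt_trans; [apply Cmod_le_sum|].
  replace (Re (Rf (z + RtoC t * u)%C - Rf z)%C) with (Re (Rf (z + RtoC t * u)%C) - Re (Rf z)) by (cunf; ring).
  replace (Im (Rf (z + RtoC t * u)%C - Rf z)%C) with (Im (Rf (z + RtoC t * u)%C) - Im (Rf z)) by (cunf; ring).
  change (Rabs (Re (Rf (z + RtoC t * u)%C) - Re (Rf z)) < eps / 2) in h1.
  change (Rabs (Im (Rf (z + RtoC t * u)%C) - Im (Rf z)) < eps / 2) in h2.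
  lra.
Qed.



Lemma cont_prod (Rt : R -> C) (R0 al : C) (be : R -> C) (Bb : R) :
 (forall t, Rabs t <= 1 -> Cmod (be t) <= Bb) ->
 (forall eps, 0 < eps -> exists del, 0 < del /\ forall t, Rabs t < del -> Cmod (Rt t - R0)%C < eps) ->
 forall eps, 0 < eps -> exists del, 0 < del /\ forall t, Rabs t < del ->
   Rabs (Im ((al + RtoC t * be t) * Cconj (Rt t))%C - Im (al * Cconj R0)%C) < eps.
Proof.
  intros HB HR eps He.
  assert (HBb : 0 <= Bb).
  { eapply Rle_trans; [apply Cmod_ge_0| apply (HB 0)]. rewrite Rabs_R0; lra. }
  pose proof (Cmod_ge_0 al) as Hal. pose proof (Cmod_ge_0 R0) as HR0.
  set (e1 := Rmin 1 (eps / 2 / (Cmod al + 1))).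
  assert (He1 : 0 < e1) by (apply Rmin_pos; [lra| apply Rdiv_lt_0_compat; lra]).
  destruct (HR e1 He1) as [del1 [Hd1 H1]].
  set (d2 := eps / 2 / ((Bb + 1) * (Cmod R0 + 1))).
  assert (Hd2 : 0 < d2) by (apply Rdiv_lt_0_compat; [lra| apply Rmult_lt_0_compat; lra]).
  exists (Rmin (Rmin del1 1) d2). split.
  { apply Rmin_pos; [apply Rmin_pos; lra| exact Hd2]. }
  intros t Ht.
  assert (Ht1 : Rabs t < del1) by (eapply Rlt_le_trans; [exact Ht|];
     eapply Rle_trans; [apply Rmin_l| apply Rmin_l]).
  assert (Ht2 : Rabs t <= 1) by (left; eapply Rlt_le_trans; [exact Ht|];
     eapply Rle_trans; [apply Rmin_l| apply Rmin_r]).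
  assert (Ht3 : Rabs t < d2) by (eapply Rlt_le_trans; [exact Ht| apply Rmin_r]).
  specialize (H1 t Ht1). specialize (HB t Ht2).
  assert (E : (Im ((al + RtoC t * be t) * Cconj (Rt t))%C - Im (al * Cconj R0)%C)
     = Im (RtoC t * be t * Cconj (Rt t) + al * Cconj (Rt t - R0))%C) by (cunf; ring).
  rewrite E. eapply Rle_lt_trans; [apply im_le_Cmod'|].
  eapply Rle_lt_trans; [apply Cmod_triangle|].
  rewrite !Cmod_mult, !Cmod_conj, Cmod_R.
  assert (HRt : Cmod (Rt t) <= Cmod R0 + 1).
  { replace (Rt t) with (R0 + (Rt t - R0))%C by (apply injective_projections; cunf; ring).
    eapply Rle_trans; [apply Cmod_triangle|].
    assert (e1 <= 1) by apply Rmin_l. lra. }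
  pose proof (Cmod_ge_0 (Rt t)). pose proof (Cmod_ge_0 (be t)). pose proof (Rabs_pos t).
  pose proof (Cmod_ge_0 (Rt t - R0)%C).
  assert (A1 : Rabs t * Cmod (be t) * Cmod (Rt t) <= Rabs t * ((Bb + 1) * (Cmod R0 + 1))).
  { rewrite Rmult_assoc. apply Rmult_le_compat_l; [lra|]. apply Rmult_le_compat; lra. }
  assert (A2 : Rabs t * ((Bb + 1) * (Cmod R0 + 1)) < eps / 2).
  { unfold d2 in Ht3. apply Rlt_div_r in Ht3; [|apply Rmult_lt_0_compat; lra]. lra. }
  assert (A3 : Cmod al * Cmod (Rt t - R0)%C <= Cmod al * (eps / 2 / (Cmod al + 1))).
  { apply Rmult_le_compat_l; [lra|]. assert (e1 <= eps / 2 / (Cmod al + 1)) by apply Rmin_r. lra. }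
  assert (A4 : Cmod al * (eps / 2 / (Cmod al + 1)) < eps / 2).
  { replace (Cmod al * (eps / 2 / (Cmod al + 1))) with ((eps / 2) * (Cmod al / (Cmod al + 1))) by (field; lra).
    assert (Cmod al / (Cmod al + 1) < 1) by (apply Rlt_div_l; lra). nra. }
  lra.
Qed.

Lemma Cmult_neq0 (x y : C) : x <> 0%C -> y <> 0%C -> (x * y)%C <> 0%C.
Proof.
  intros Hx Hy E. assert (Cmod (x * y)%C = 0) by (rewrite E; apply Cmod_0).
  rewrite Cmod_mult in H. apply Rmult_integral in H. destruct H as [H|H];
  apply Cmod_eq_0 in H; auto.
Qed.

Lemma Cconj_neq0 (x : C) : x <> 0%C -> Cconj x <> 0%C.
Proof.
  intros Hx E. apply Hx. destruct x as [x1 x2]. unfold Cconj in E; simpl in E.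
  injection E; intros; apply injective_projections; simpl; [|]; unfold RtoC; simpl; lra.
Qed.

Lemma local_desc (p Rf : C -> C) (a c0 s : R) (U : C -> Prop) (z : C) :
  (s = 1 \/ s = -1) -> 0 < s * Im z ->
  (exists rU, 0 < rU /\ forall w, box w z rU -> U w) ->
  (forall w, U w -> is_derive (K := C_AbsRing) (V := C_NormedModule) p w
        ((w * w - RtoC a * w + RtoC c0) / Rf w)%C) ->
  continuous Rf z -> Rf z <> 0%C ->
  forall r, 0 < r -> exists w, box w z r /\ U w /\ s * Im (p w) < s * Im (p z).
Proof.
  intros Hs Hsz [rU [HrU HUw]] Hder Hc HRz r Hr.
  pose (Q := fun w : C => (w * w - RtoC a * w + RtoC c0)%C).
  pose (c := (z + z - RtoC a)%C).
  assert (QE : forall (t : R) (u : C), (u * Q (z + RtoC t * u) =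
      u * Q z + RtoC t * (u * u * (c + RtoC t * u)))%C).
  { intros t u. unfold Q, c. apply injective_projections; cunf; ring. }
  assert (Step1 : exists u del, Rabs (Re u) <= 1 /\ Rabs (Im u) <= 1 /\ 0 < del /\
     forall t, 0 < t < del ->
       s * Im (u * Q (z + RtoC t * u) * Cconj (Rf (z + RtoC t * u)))%C < 0).
  { destruct (classic (Q z = 0%C)) as [HQ|HQ].
    - assert (Hc0 : c <> 0%C).
      { intro E. assert (Im c = 0) by (rewrite E; reflexivity).
        unfold c in H; cunf. destruct Hs as [-> | ->]; lra. }
      destruct (choose_u2 s (c * Cconj (Rf z))%C Hs (Cmult_neq0 _ _ Hc0 (Cconj_neq0 _ HRz)))
        as [u [hu1 [hu2 hu3]]].
      set (v0 := Im (u * u * c * Cconj (Rf z))%C).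
      assert (Hv0 : s * v0 < 0).
      { unfold v0. rewrite <- (Cmult_assoc (u * u)%C). exact hu3. }
      assert (Hav : 0 < Rabs v0) by (apply Rabs_pos_lt; intro E; rewrite E in Hv0; lra).
      destruct (cont_prod (fun t => Rf (z + RtoC t * u)%C) (Rf z) (u * u * c)%C
                  (fun _ => u * u * u)%C (Cmod (u * u * u)%C)
                  (fun t _ => Rle_refl _) (cont_line Rf z u Hc hu1 hu2) (Rabs v0) Hav)
        as [del [Hdel H]].
      exists u, del. repeat split; try assumption.
      intros t [Ht1 Ht2].
      assert (Htd : Rabs t < del) by (rewrite Rabs_right; lra).
      specialize (H t Htd). fold v0 in H.
      assert (E : (u * Q (z + RtoC t * u) * Cconj (Rf (z + RtoC t * u)))%C =
                  (RtoC t * ((u * u * c + RtoC t * (u * u * u)) * Cconj (Rf (z + RtoC t * u))))%C).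
      { rewrite QE, HQ. apply injective_projections; cunf; ring. }
      rewrite E.
      replace (Im (RtoC t * ((u * u * c + RtoC t * (u * u * u)) * Cconj (Rf (z + RtoC t * u))))%C)
        with (t * Im ((u * u * c + RtoC t * (u * u * u)) * Cconj (Rf (z + RtoC t * u)))%C)
        by (cunf; ring).
      revert H Hv0. generalize (Im ((u * u * c + RtoC t * (u * u * u)) * Cconj (Rf (z + RtoC t * u)))%C).
      intros X H Hv0.
      destruct Hs as [-> | ->]; unfold Rabs in *; repeat destruct Rcase_abs; nra.
    - destruct (choose_u1 s (Q z * Cconj (Rf z))%C Hs (Cmult_neq0 _ _ HQ (Cconj_neq0 _ HRz)))
        as [u [hu1 [hu2 hu3]]].
      set (v0 := Im (u * Q z * Cconj (Rf z))%C).
      assert (Hv0 : s * v0 < 0).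
      { unfold v0. rewrite <- (Cmult_assoc u). exact hu3. }
      assert (Hav : 0 < Rabs v0) by (apply Rabs_pos_lt; intro E; rewrite E in Hv0; lra).
      assert (HB : forall t, Rabs t <= 1 ->
                Cmod ((fun t => u * u * (c + RtoC t * u)) t)%C <= Cmod u * Cmod u * (Cmod c + Cmod u)).
      { intros t Ht. simpl. rewrite !Cmod_mult.
        pose proof (Cmod_ge_0 u).
        apply Rmult_le_compat_l; [apply Rmult_le_pos; lra|].
        eapply Rle_trans; [apply Cmod_triangle|]. rewrite Cmod_mult, Cmod_R.
        pose proof (Rabs_pos t). nra. }
      destruct (cont_prod (fun t => Rf (z + RtoC t * u)%C) (Rf z) (u * Q z)%C
                  (fun t => u * u * (c + RtoC t * u))%C _
                  HB (cont_line Rf z u Hc hu1 hu2) (Rabs v0) Hav)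
        as [del [Hdel H]].
      exists u, del. repeat split; try assumption.
      intros t [Ht1 Ht2].
      assert (Htd : Rabs t < del) by (rewrite Rabs_right; lra).
      specialize (H t Htd). fold v0 in H. rewrite QE.
      revert H Hv0. generalize (Im ((u * Q z + RtoC t * (u * u * (c + RtoC t * u))) * Cconj (Rf (z + RtoC t * u)))%C).
      intros X H Hv0.
      destruct Hs as [-> | ->]; unfold Rabs in *; repeat destruct Rcase_abs; nra. }
  destruct Step1 as [u [del [hu1 [hu2 [Hdel Hneg]]]]].
  assert (HboxT : forall t, 0 <= t -> t < rU -> box (z + RtoC t * u)%C z rU).
  { intros t Ht0 Ht1. split.
    - replace (Re (z + RtoC t * u)%C - Re z) with (t * Re u) by (cunf; ring).
      rewrite Rabs_mult, Rabs_right by lra. nra.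
    - replace (Im (z + RtoC t * u)%C - Im z) with (t * Im u) by (cunf; ring).
      rewrite Rabs_mult, Rabs_right by lra. nra. }
  set (T := Rmin (Rmin del rU) r / 2).
  assert (HT0 : 0 < T) by (unfold T; apply Rdiv_lt_0_compat; [repeat apply Rmin_pos; lra| lra]).
  assert (HT1 : T < del) by (unfold T; pose proof (Rmin_l (Rmin del rU) r);
      pose proof (Rmin_l del rU); lra).
  assert (HT2 : T < rU) by (unfold T; pose proof (Rmin_l (Rmin del rU) r);
      pose proof (Rmin_r del rU); lra).
  assert (HT3 : T < r) by (unfold T; pose proof (Rmin_r (Rmin del rU) r); lra).
  destruct (MVT_cor2 (fun t => s * Im (p (z + RtoC t * u)%C))
             (fun t => s * Im (u * (Q (z + RtoC t * u) / Rf (z + RtoC t * u)))%C) 0 T HT0)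
    as [cc [Hmvt [Hc1 Hc2]]].
  { intros t [Ht1 Ht2].
    apply (derivable_pt_lim_scal (fun t => Im (p (z + RtoC t * u)%C)) s).
    apply line_deriv. apply Hder. apply HUw. apply HboxT; lra. }
  assert (Hf : s * Im (u * (Q (z + RtoC cc * u) / Rf (z + RtoC cc * u)))%C < 0).
  { unfold Cdiv. rewrite Cmult_assoc. apply sign_div. apply Hneg. lra. }
  exists (z + RtoC T * u)%C. split; [|split].
  - split.
    + replace (Re (z + RtoC T * u)%C - Re z) with (T * Re u) by (cunf; ring).
      rewrite Rabs_mult, Rabs_right by lra. nra.
    + replace (Im (z + RtoC T * u)%C - Im z) with (T * Im u) by (cunf; ring).
      rewrite Rabs_mult, Rabs_right by lra. nra.
  - apply HUw. apply HboxT; lra.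
  - replace (z + RtoC 0 * u)%C with z in Hmvt by (apply injective_projections; cunf; ring).
    nra.
Qed.

Lemma deriv_cont (f : C -> C) (z D : C) :
  is_derive (K := C_AbsRing) (V := C_NormedModule) f z D ->
  forall eps, 0 < eps -> exists del, 0 < del /\ forall w, box w z del ->
    Cmod (f w - f z)%C < eps.
Proof.
  intros Hd eps He.
  destruct (deriv_eps f z D Hd 1 Rlt_0_1) as [del [Hdel H]].
  pose proof (Cmod_ge_0 D).
  set (d := Rmin (del / 2) (eps / 2 / (Cmod D + 1))).
  assert (Hd0 : 0 < d) by (apply Rmin_pos; apply Rdiv_lt_0_compat; lra).
  exists d; split; [exact Hd0|]. intros w [b1 b2].
  assert (Hdd : d <= del / 2) by apply Rmin_l.
  assert (Hde : d <= eps / 2 / (Cmod D + 1)) by apply Rmin_r.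
  assert (Hw : Cmod (w - z)%C < 2 * d).
  { eapply Rle_lt_trans; [apply Cmod_le_sum|].
    replace (Re (w - z)%C) with (Re w - Re z) by (cunf; ring).
    replace (Im (w - z)%C) with (Im w - Im z) by (cunf; ring). lra. }
  specialize (H w ltac:(lra)).
  replace (f w - f z)%C with ((f w - f z - (w - z) * D) + (w - z) * D)%C
    by (apply injective_projections; cunf; ring).
  eapply Rle_lt_trans; [apply Cmod_triangle|]. rewrite Cmod_mult.
  pose proof (Cmod_ge_0 (w - z)%C).
  assert (Cmod (w - z)%C * (Cmod D + 1) < eps).
  { apply Rlt_le_trans with (2 * d * (Cmod D + 1)).
    - apply Rmult_lt_compat_r; lra.
    - apply Rle_trans with (2 * (eps / 2 / (Cmod D + 1)) * (Cmod D + 1)).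
      + apply Rmult_le_compat_r; lra.
      + right; field; lra. }
  nra.
Qed.

Lemma arc_closed (gamma : R -> C) (w : C) : (forall t, continuous gamma t) ->
  ~ on_arc gamma w -> exists r, 0 < r /\ forall v, box v w r -> ~ on_arc gamma v.
Proof.
  intros Hg Hw.
  set (phi := fun x (y : R) => Rabs (Re (gamma x) - Re w) + Rabs (Im (gamma x) - Im w)).
  destruct (evt2 phi 0 1 0 0) as [x0 [y0 [Hx0 [_ Hmin]]]]; try lra.
  { intros x y e He.
    assert (He2 : 0 < e / 2) by lra.
    destruct (proj1 (filterlim_locally gamma (gamma x)) (Hg x) (mkposreal _ He2)) as [del Hdel].
    exists del; split; [apply cond_pos|]. intros x' y' hx hy.
    specialize (Hdel x' hx). rewrite ballC in Hdel. destruct Hdel as [h1 h2].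
    simpl in h1, h2. unfold phi.
    pose proof (Rabs_triang_inv (Re (gamma x') - Re w) (Re (gamma x) - Re w)).
    pose proof (Rabs_triang_inv (Re (gamma x) - Re w) (Re (gamma x') - Re w)).
    pose proof (Rabs_triang_inv (Im (gamma x') - Im w) (Im (gamma x) - Im w)).
    pose proof (Rabs_triang_inv (Im (gamma x) - Im w) (Im (gamma x') - Im w)).
    replace (Re (gamma x') - Re w - (Re (gamma x) - Re w)) with (Re (gamma x') - Re (gamma x)) in * by ring.
    replace (Re (gamma x) - Re w - (Re (gamma x') - Re w)) with (- (Re (gamma x') - Re (gamma x))) in * by ring.
    replace (Im (gamma x') - Im w - (Im (gamma x) - Im w)) with (Im (gamma x') - Im (gamma x)) in * by ring.
    replace (Im (gamma x) - Im w - (Im (gamma x') - Im w)) with (- (Im (gamma x') - Im (gamma x))) in * by ring.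
    rewrite Rabs_Ropp in *.
    apply Rabs_def1; lra. }
  assert (Hpos : 0 < phi x0 y0).
  { unfold phi. pose proof (Rabs_pos (Re (gamma x0) - Re w)). pose proof (Rabs_pos (Im (gamma x0) - Im w)).
    destruct (Rle_lt_or_eq_dec 0 (Rabs (Re (gamma x0) - Re w))) as [|E1]; [assumption|lra|].
    destruct (Rle_lt_or_eq_dec 0 (Rabs (Im (gamma x0) - Im w))) as [|E2]; [assumption|lra|].
    exfalso. apply Hw. exists x0. split; [exact Hx0|].
    symmetry in E1, E2. apply Rabs_eq_0 in E1. apply Rabs_eq_0 in E2.
    apply injective_projections; unfold Re, Im in *; lra. }
  exists (phi x0 y0 / 2). split; [lra|].
  intros v [b1 b2] [t [Ht Hv]].
  specialize (Hmin t 0 Ht ltac:(lra)). unfold phi in Hmin at 2. rewrite Hv in Hmin. lra.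
Qed.

Lemma conj_arc_closed (gamma : R -> C) (w : C) : (forall t, continuous gamma t) ->
  ~ on_conj_arc gamma w -> exists r, 0 < r /\ forall v, box v w r -> ~ on_conj_arc gamma v.
Proof.
  intros Hg Hw. destruct (arc_closed gamma (Cconj w) Hg Hw) as [r [Hr H]].
  exists r; split; [exact Hr|]. intros v [b1 b2]. apply H. split.
  - cunf. exact b1.
  - cunf. replace (- snd v - - snd w) with (- (snd v - snd w)) by ring. rewrite Rabs_Ropp. exact b2.
Qed.

Lemma Rabs_s (s : R) : s = 1 \/ s = -1 -> Rabs s = 1.
Proof. intros [-> | ->]; unfold Rabs; destruct Rcase_abs; lra. Qed.

Theorem lemma2p1 :
  forall (z1 z2 : C) (gamma : R -> C) (Rf p : C -> C) (c0 : R) (E : C),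
    0 < Im z1 < Im z2 ->
    is_arc gamma z1 z2 ->
    (forall t : R, 0 <= t <= 1 -> 0 < Im (gamma t)) ->
    (forall z, Omega gamma z -> (Rf z * Rf z)%C = quartic z1 z2 z) ->
    (forall z, Omega gamma z -> continuous Rf z) ->
    (exists M : R, forall x : R, M < x ->
        Im (Rf (RtoC x)) = 0 /\ 0 < Re (Rf (RtoC x))) ->
    (forall z, Omega gamma z ->
        is_derive (K := C_AbsRing) (V := C_NormedModule) p z
          ((z * z - RtoC (Re (z1 + z2)) * z + RtoC c0) / Rf z)%C) ->
    filterlim p (within (Omega gamma) (locally z2)) (locally (RtoC 0)) ->
    (exists K M : R, 0 < M /\ forall z, M < Cmod z ->
        Cmod (p z - z - E)%C <= K / Cmod z) ->
    (forall z, Omega gamma z -> (Im (p z) = 0 <-> Im z = 0)) ->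
    (forall w, on_arc gamma w \/ on_conj_arc gamma w ->
        filterlim (fun z => Im (p z)) (within (Omega gamma) (locally w))
          (locally 0)) ->
    forall z : C,
      (0 < Im z -> ~ on_arc gamma z -> 0 < Im (p z - E)%C) /\
      (Im z < 0 -> ~ on_conj_arc gamma z -> Im (p z - E)%C < 0).
Proof.
  intros z1 z2 gamma Rf p c0 E Hz12 [Hgc [_ [Hg0 Hg1]]] Hup HR2 HRc _ Hder _ [K [M [HM Hasym]]] Hlev Hcut.
  assert (Harc_pos : forall v, on_arc gamma v -> 0 < Im v).
  { intros v [t [Ht <-]]. apply Hup; exact Ht. }
  assert (Hconj_neg : forall v, on_conj_arc gamma v -> Im v < 0).
  { intros v Hv. apply Harc_pos in Hv. cunf. lra. }
  assert (Hreal_Om : forall v, Im v = 0 -> Omega gamma v).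
  { intros v Hv. split; intro H.
    - apply Harc_pos in H; lra.
    - apply Hconj_neg in H; lra. }
  assert (HImE : Im E = 0).
  { destruct (Req_dec (Im E) 0) as [|Hne]; [assumption|exfalso].
    assert (HaE : 0 < Rabs (Im E)) by (apply Rabs_pos_lt; exact Hne).
    set (x := Rmax M 0 + 1 + Rabs K / Rabs (Im E)).
    assert (Hx0 : Rmax M 0 + 1 <= x).
    { unfold x. pose proof (Rabs_pos K).
      assert (0 <= Rabs K / Rabs (Im E)) by (apply Rdiv_le_0_compat; lra). lra. }
    pose proof (Rmax_l M 0); pose proof (Rmax_r M 0).
    assert (Hxp : 0 < x) by lra.
    assert (Hcx : Cmod (RtoC x) = x) by (rewrite Cmod_R; apply Rabs_right; lra).
    specialize (Hasym (RtoC x) ltac:(rewrite Hcx; lra)). rewrite Hcx in Hasym.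
    assert (Hpx : Im (p (RtoC x)) = 0) by (apply Hlev; [apply Hreal_Om; reflexivity| reflexivity]).
    pose proof (im_le_Cmod' (p (RtoC x) - RtoC x - E)%C) as Hi.
    replace (Im (p (RtoC x) - RtoC x - E)%C) with (- Im E) in Hi by (cunf; unfold Im in Hpx; lra).
    rewrite Rabs_Ropp in Hi.
    assert (Rabs K < x * Rabs (Im E)).
    { assert (Rabs K / Rabs (Im E) < x) by (unfold x; lra).
      apply Rlt_div_l in H1; lra. }
    assert (K / x < Rabs (Im E)).
    { apply Rlt_div_l; [lra|]. pose proof (Rle_abs K). lra. }
    lra. }
  assert (Main : forall (s : R) (S : C -> Prop), (s = 1 \/ s = -1) ->
     (forall v, S v -> on_arc gamma v \/ on_conj_arc gamma v) ->
     (forall v, 0 < s * Im v -> ~ S v -> Omega gamma v) ->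
     (forall v, 0 < s * Im v -> on_arc gamma v \/ on_conj_arc gamma v -> S v) ->
     (forall w, ~ S w -> exists r, 0 < r /\ forall v, box v w r -> ~ S v) ->
     forall v, 0 < s * Im v -> ~ S v -> 0 < s * Im (p v)).
  { intros s S Hs HSc HOm HSin HScl.
    set (U := fun v => 0 < s * Im v /\ ~ S v).
    assert (HUO : forall v, U v -> Omega gamma v) by (intros v [h1 h2]; apply HOm; assumption).
    assert (Hopen : forall v, U v -> exists r, 0 < r /\ forall w, box w v r -> U w).
    { intros v [Hv1 Hv2]. destruct (HScl v Hv2) as [r [Hr Hrw]].
      exists (Rmin r (Rabs (Im v))). split.
      { apply Rmin_pos; [exact Hr| apply Rabs_pos_lt; intro E0; rewrite E0 in Hv1; lra]. }
      intros w [b1 b2]. split.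
      - assert (b3 : Rabs (Im w - Im v) < Rabs (Im v)) by (eapply Rlt_le_trans; [exact b2| apply Rmin_r]).
        destruct Hs as [-> | ->]; unfold Rabs in *; repeat destruct Rcase_abs; lra.
      - apply Hrw. split; eapply Rlt_le_trans; eauto; apply Rmin_l. }
    assert (Hne : forall v, U v -> Im v <> 0).
    { intros v [Hv _] E0. rewrite E0 in Hv. lra. }
    intros v Hv1 Hv2.
    apply (core (fun v => s * Im (p v)) U S s Hs).
    - intro; unfold U; tauto.
    - intros w Hw E0. apply (Hne w Hw). apply (Hlev w (HUO w Hw)).
      destruct Hs as [-> | ->]; lra.
    - intros w Hw eps Heps.
      destruct (deriv_cont p w _ (Hder w (HUO w Hw)) eps Heps) as [del [Hdel H]].
      exists del; split; [exact Hdel|]. intros w' Hb.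
      specialize (H w' Hb).
      eapply Rle_lt_trans; [|exact H].
      replace (s * Im (p w') - s * Im (p w)) with (s * Im (p w' - p w)%C) by (cunf; ring).
      rewrite Rabs_mult. eapply Rle_trans; [|apply im_le_Cmod'].
      rewrite (Rabs_s s Hs); lra.
    - intros w Hw eps Heps.
      destruct (deriv_cont p w _ (Hder w (Hreal_Om w Hw)) eps Heps) as [del [Hdel H]].
      exists del; split; [exact Hdel|]. intros w' Hb _.
      specialize (H w' Hb).
      assert (Hpw : Im (p w) = 0) by (apply Hlev; [apply Hreal_Om|]; assumption).
      eapply Rle_lt_trans; [|exact H].
      replace (s * Im (p w')) with (s * Im (p w' - p w)%C) by (cunf; unfold Im in Hpw; rewrite Hpw; ring).
      rewrite Rabs_mult. eapply Rle_trans; [|apply im_le_Cmod'].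
      rewrite (Rabs_s s Hs); lra.
    - intros w Hw eps Heps.
      destruct (proj1 (filterlim_locally _ 0) (Hcut w (HSc w Hw)) (mkposreal _ Heps)) as [del Hdel].
      exists del; split; [apply cond_pos|]. intros w' Hb HUw'.
      assert (Hb' : ball w del w') by (rewrite ballC; exact Hb).
      specialize (Hdel w' Hb' (HUO w' HUw')).
      change (Rabs (Im (p w') - 0) < eps) in Hdel. rewrite Rminus_0_r in Hdel.
      rewrite Rabs_mult.
      rewrite (Rabs_s s Hs); lra.
    - exists K, M. intros w Hw [HUw _].
      assert (Hcw : 0 < Cmod w) by lra.
      specialize (Hasym w Hw).
      pose proof (im_le_Cmod' (p w - w - E)%C) as Hi.
      replace (Im (p w - w - E)%C) with (Im (p w) - Im w) in Hi by (cunf; unfold Im in HImE; rewrite HImE; ring).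
      assert (- K / Cmod w = - (K / Cmod w)) by (field; lra).
      destruct Hs as [-> | ->]; unfold Rabs in Hi; destruct Rcase_abs; lra.
    - exact Hopen.
    - intros w Hw r Hr.
      apply (local_desc p Rf (Re (z1 + z2)%C) c0 s U w Hs (proj1 Hw) (Hopen w Hw)).
      + intros w' Hw'. apply Hder. apply HUO; exact Hw'.
      + apply HRc, HUO; exact Hw.
      + intro HR0.
        assert (Hq : quartic z1 z2 w = 0%C).
        { rewrite <- HR2 by (apply HUO; exact Hw). rewrite HR0.
          apply injective_projections; cunf; ring. }
        assert (Hsep : forall q, on_arc gamma q \/ on_conj_arc gamma q -> (w - q)%C <> 0%C).
        { intros q Hq' E0. assert (w = q).
          { apply injective_projections; unfold Cminus, Cplus, Copp in E0;
            injection E0; simpl; intros; lra. }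
          subst q. destruct Hw as [Hw1 Hw2]. apply Hw2. apply HSin; assumption. }
        assert (A1 : on_arc gamma z1) by (exists 0; split; [lra| exact Hg0]).
        assert (A2 : on_arc gamma z2) by (exists 1; split; [lra| exact Hg1]).
        assert (A3 : on_conj_arc gamma (Cconj z1)).
        { unfold on_conj_arc. replace (Cconj (Cconj z1)) with z1 by (apply injective_projections; cunf; ring). exact A1. }
        assert (A4 : on_conj_arc gamma (Cconj z2)).
        { unfold on_conj_arc. replace (Cconj (Cconj z2)) with z2 by (apply injective_projections; cunf; ring). exact A2. }
        revert Hq. unfold quartic.
        repeat apply Cmult_neq0; apply Hsep; tauto.
      + exact Hr.
    - split; assumption. }
  intros z. split.
  - intros Hz Hna.
    assert (H := Main 1 (on_arc gamma) ltac:(left; reflexivity)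
       ltac:(intros; left; assumption)
       ltac:(intros v Hv Hnv; split; [exact Hnv| intro Hc; apply Hconj_neg in Hc; lra])
       ltac:(intros v Hv [Ha|Hc]; [exact Ha| apply Hconj_neg in Hc; lra])
       (fun w Hw => arc_closed gamma w Hgc Hw) z ltac:(lra) Hna).
    replace (Im (p z - E)%C) with (Im (p z)) by (cunf; unfold Im in HImE; rewrite HImE; ring). lra.
  - intros Hz Hna.
    assert (H := Main (-1) (on_conj_arc gamma) ltac:(right; reflexivity)
       ltac:(intros; right; assumption)
       ltac:(intros v Hv Hnv; split; [intro Hc; apply Harc_pos in Hc; lra| exact Hnv])
       ltac:(intros v Hv [Ha|Hc]; [apply Harc_pos in Ha; lra| exact Hc])
       (fun w Hw => conj_arc_closed gamma w Hgc Hw) z ltac:(lra) Hna).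
    replace (Im (p z - E)%C) with (Im (p z)) by (cunf; unfold Im in HImE; rewrite HImE; ring). lra.
Qed.
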